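(* For every odd positive integer $m$, the set of nonnegative integers $s$ such that $m\nmid \binom{2^{s+1}}{2^s}$ has asymptotic density $0$; that is, $\#\{0\le s<a : m\nmid \binom{2^{s+1}}{2^s}\}/a\to 0$ as $a\to\infty$. *)

(* Defs.v *)
From Stdlib Require Import Reals.
From mathcomp Require Import all_boot.
Definition bad_count (m a : nat) : nat :=
  count (fun s => ~~ (m %| 'C(2 ^ s.+1, 2 ^ s))) (iota 0 a).

(* Main.v *)
Require Import Defs.
From Stdlib Require Import Reals Lra ZArith.
From mathcomp Require Import all_boot.
From mathcomp Require Import zify ring.


Lemma binexp x n : exists c, (1 + x) ^ n = 1 + n * x + 'C(n, 2) * x ^ 2 + x ^ 3 * c.
Proof.
elim: n => [|n [c IH]]; first by exists 0; rewrite expn0 !muln0 !mul0n !addn0.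
exists ('C(n,2) + c + c * x).
rewrite expnS IH binS bin1. ring.
Qed.

Lemma odd_prime_ndvd2 (p : nat) : prime p -> odd p -> ~~ (p %| 2).
Proof.
move=> pp op; apply/negP => /dvdn_leq => /(_ isT) h.
have := prime_gt1 pp. move: op h. case: p pp => [|[|[|]]] //.
Qed.

Lemma ndvd_pow2 p s : prime p -> odd p -> ~~ (p %| 2 ^ s).
Proof.
move=> pp op; rewrite Euclid_dvdX //; by rewrite (negbTE (odd_prime_ndvd2 p pp op)).
Qed.

Lemma lift_step p k v : prime p -> odd p -> ~~ (p %| v) ->
  exists v', (1 + p ^ k.+1 * v) ^ p = 1 + p ^ k.+2 * v' /\ ~~ (p %| v').
Proof.
move=> pp op nv.
have [c Hc] := binexp (p ^ k.+1 * v) p.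
set h := p./2.
have Hp : p = h.*2.+1.
  by rewrite -[in LHS](odd_double_half p) op.
have Hb : 'C(p, 2) = p * h.
  by rewrite bin2 {2}Hp /= -doubleMr half_double.
exists (v + p * (h * p ^ k * v ^ 2 + p ^ (2 * k) * v ^ 3 * c)).
split.
  have E : p ^ (2 * k) = p ^ k * p ^ k by rewrite mul2n -addnn expnD.
  rewrite Hc Hb E !expnS. ring.
by rewrite dvdn_addl ?nv // dvdn_mulr.
Qed.


Lemma tower p D t u : prime p -> odd p -> 0 < t -> 2 ^ D = 1 + p ^ t * u -> ~~ (p %| u) ->
  forall i, exists v, 2 ^ (D * p ^ i) = 1 + p ^ (t + i) * v /\ ~~ (p %| v).
Proof.
move=> pp op t0 HD nu; elim=> [|i [v [Hv nv]]].
  by exists u; rewrite expn0 muln1 addn0.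
have [v' [E nv']] := lift_step p (t + i).-1 v pp op nv.
exists v'; split => //.
have ti : 0 < t + i by rewrite addn_gt0 t0.
rewrite expnS mulnCA mulnC expnM Hv -(prednK ti) E.
by rewrite addnS prednK.
Qed.

Lemma start p : prime p -> odd p ->
  exists D t u, [/\ 0 < D, 0 < t, 2 ^ D = 1 + p ^ t * u & ~~ (p %| u)].
Proof.
move=> pp op.
have p3 : 2 < p.
  have := prime_gt1 pp; move: op; case: p pp => [|[|[|]]] //.
set D := p.-1.
have HD : p = D.+1 by rewrite /D prednK //; lia.
have D0 : 0 < D by lia.
have n0 : 0 < 2 ^ D - 1.
  have : 2 <= 2 ^ D by rewrite -{1}(expn1 2) leq_exp2l.
  lia.
have Hdiv : p %| 2 ^ D - 1.
  have F := fermat_little 2 pp.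
  rewrite {1}HD expnS in F.
  have : p %| 2 * 2 ^ D - 2.
    rewrite -eqn_mod_dvd; last by rewrite -{1}(muln1 2) leq_mul2l expn_gt0.
    by apply/eqP.
  by rewrite -[X in _ - X](muln1 2) -mulnBr Euclid_dvdM // (negbTE (odd_prime_ndvd2 p pp op)).
have [u cu E] := pfactor_coprime pp n0.
exists D, (logn p (2 ^ D - 1)), u; split => //.
- by rewrite logn_gt0 mem_primes pp n0 Hdiv.
- by rewrite mulnC -E subnKC // expn_gt0.
- by rewrite -prime_coprime.
Qed.


Definition Lk (p k n : nat) : bool := p ^ k <= 2 * (n %% p ^ k).

Lemma Lk_per p j P v k s c : 2 ^ P = 1 + p ^ j * v -> k <= j ->
  Lk p k (2 ^ (s + P * c)) = Lk p k (2 ^ s).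
Proof.
move=> HP kj; rewrite /Lk.
suff -> : 2 ^ (s + P * c) %% p ^ k = 2 ^ s %% p ^ k by [].
have dk : p ^ k %| p ^ j := dvdn_exp2l p kj.
have H1 : (1 + p ^ j * v) ^ c %% p ^ j = 1 %% p ^ j.
  by rewrite -modnXm addnC mulnC modnMDl modnXm exp1n.
rewrite expnD expnM HP -(modn_dvdm _ dk) -modnMmr H1 modnMmr muln1.
by rewrite (modn_dvdm _ dk).
Qed.

Lemma digit_bound p j n : 0 < p -> ~~ Lk p j.+1 n -> 2 * ((n %/ p ^ j) %% p) < p.
Proof.
move=> p0; rewrite /Lk -ltnNge => H.
have pj : 0 < p ^ j by rewrite expn_gt0 p0.
have E : (n %% p ^ j.+1) %/ p ^ j = (n %/ p ^ j) %% p.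
  by rewrite divn_modl ?expnS ?dvdn_mull // mulnK.
have L := leq_trunc_div (n %% p ^ j.+1) (p ^ j).
rewrite E in L.
rewrite -(ltn_pmul2r pj) -mulnA.
apply: leq_ltn_trans (_ : 2 * (n %% p ^ j.+1) < _).
  by rewrite leq_mul2l L orbT.
by rewrite -expnS.
Qed.

Lemma digit_shift p j P v s c : prime p -> 0 < j -> 2 ^ P = 1 + p ^ j * v ->
  exists W, 2 ^ (s + P * c) = (2 ^ s * c * v + p * W) * p ^ j + 2 ^ s.
Proof.
move=> pp j0 HP.
have [z Hz] := binexp (p ^ j * v) c.
case: j j0 HP Hz => [|k] // _ HP Hz.
exists (2 ^ s * ('C(c, 2) * p ^ k * v ^ 2 + p ^ k * p ^ k * p * v ^ 3 * z)).
rewrite expnD expnM HP Hz !expnS. ring.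
Qed.

Lemma count_small p j P v s : prime p -> odd p -> 0 < j -> 2 ^ P = 1 + p ^ j * v ->
  ~~ (p %| v) ->
  count (fun c => ~~ Lk p j.+1 (2 ^ (s + P * c))) (iota 0 p) <= p./2.+1.
Proof.
move=> pp op j0 HP nv.
have p0 := prime_gt0 pp.
have pj : 0 < p ^ j by rewrite expn_gt0 p0.
set f := fun c => (2 ^ s %/ p ^ j + 2 ^ s * c * v) %% p.
have dig : forall c, (2 ^ (s + P * c) %/ p ^ j) %% p = f c.
  move=> c; have [W ->] := digit_shift p j P v s c pp j0 HP.
  rewrite divnMDl // /f.
  have -> : 2 ^ s * c * v + p * W + 2 ^ s %/ p ^ j = W * p + (2 ^ s %/ p ^ j + 2 ^ s * c * v) by ring.
  by rewrite modnMDl.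
have key : forall c, ~~ Lk p j.+1 (2 ^ (s + P * c)) -> f c < p./2.+1.
  move=> c /(digit_bound p j _ p0); rewrite dig => H.
  have := odd_double_half p; rewrite op -mul2n.
  move: (f c) (p./2) H => d q H E /=; lia.
have nyv : ~~ (p %| 2 ^ s * v).
  by rewrite Euclid_dvdM // negb_or ndvd_pow2.
have inj1 : forall c1 c2, c1 < p -> c2 <= c1 -> f c1 = f c2 -> c1 = c2.
  move=> c1 c2 c1p le21 /eqP; rewrite /f eqn_modDl.
  rewrite (mulnAC (2 ^ s) c1) (mulnAC (2 ^ s) c2) eqn_mod_dvd ?leq_mul2l ?le21 ?orbT //.
  rewrite -mulnBr Euclid_dvdM // (negbTE nyv) /=.
  case E: (c1 - c2) => [|k].
    by move=> _; apply/eqP; rewrite eqn_leq le21 -subn_eq0 E.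
  move/dvdn_leq => /(_ isT) H; exfalso.
  have : c1 - c2 < p by apply: leq_ltn_trans (leq_subr _ _) c1p.
  by rewrite E ltnNge H.
have inj : {in iota 0 p &, injective f}.
  move=> c1 c2; rewrite !mem_iota !add0n /= => h1 h2 e.
  case: (leqP c2 c1) => h; first exact: inj1.
  by apply/esym/inj1; [exact h2 | exact: ltnW h | rewrite e].
rewrite -size_filter -(size_map f).
rewrite -[p./2.+1](size_iota 0).
apply: uniq_leq_size.
  rewrite map_inj_in_uniq ?filter_uniq ?iota_uniq //.
  by move=> x y; rewrite !mem_filter => /andP[_ hx] /andP[_ hy]; apply: inj.
move=> x /mapP [c]; rewrite mem_filter => /andP [Hc _] ->.
by rewrite mem_iota /= key.
Qed.


Lemma cnt (a : pred nat) n : count a (iota 0 n) = \sum_(0 <= i < n) a i.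
Proof.
rewrite -sum1_count big_mkcond /index_iota subn0 /=.
by apply: eq_bigr => i _; case: (a i).
Qed.

Lemma decomp (F : nat -> nat) P k :
  \sum_(0 <= i < P * k) F i = \sum_(0 <= c < k) \sum_(0 <= i < P) F (i + P * c).
Proof.
elim: k => [|k IH]; first by rewrite muln0 !big_geq.
rewrite big_nat_recr //= -IH mulnS addnC (big_cat_nat _ (leq_addr _ _)) //=.
congr (_ + _).
rewrite -{1}[P * k]add0n big_addn.
by rewrite (_ : P * k + P - P * k = P) //; lia.
Qed.

Lemma periodic_bound (F : nat -> nat) P a : 0 < P -> (forall i, F (i + P) = F i) ->
  \sum_(0 <= i < a) F i <= (a %/ P).+1 * \sum_(0 <= i < P) F i.
Proof.
move=> P0 HF.
have HF' : forall c i, F (i + P * c) = F i.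
  elim=> [|c IH] i; first by rewrite muln0 addn0.
  by rewrite mulnS addnCA addnC HF IH.
have aK : a <= P * (a %/ P).+1 by rewrite mulnC ltnW // ltn_ceil.
apply: leq_trans (_ : _ <= \sum_(0 <= i < P * (a %/ P).+1) F i) _.
  by rewrite (big_cat_nat (leq0n a) aK) /= leq_addr.
rewrite decomp.
under eq_bigr do under eq_bigr do rewrite HF'.
by rewrite sum_nat_const_nat subn0.
Qed.

Definition allsm (p lo B s : nat) : bool := all (fun k => ~~ Lk p k (2 ^ s)) (iota lo.+1 B).

Lemma block_bound p D t n0 B : prime p -> odd p -> 0 < t ->
  (forall i, exists v, 2 ^ (D * p ^ i) = 1 + p ^ (t + i) * v /\ ~~ (p %| v)) ->
  \sum_(0 <= s < D * p ^ (n0 + B)) allsm p (t + n0) B s <= (p./2.+1) ^ B * (D * p ^ n0).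
Proof.
move=> pp op t0 H.
elim: B => [|B IH].
  rewrite addn0 expn0 mul1n.
  under eq_bigr do rewrite /allsm /=.
  by rewrite sum_nat_const_nat subn0 muln1.
set P := D * p ^ (n0 + B).
have [v [Hv nv]] := H (n0 + B).
have -> : D * p ^ (n0 + B.+1) = P * p by rewrite /P addnS expnS; ring.
rewrite decomp.
have Hs : forall x, allsm p (t + n0) B.+1 x = allsm p (t + n0) B x && ~~ Lk p (t + n0 + B).+1 (2 ^ x).
  by move=> x; rewrite /allsm -[B.+1]addn1 iotaD all_cat /= andbT addSn.
have Hper : forall s c, allsm p (t + n0) B (s + P * c) = allsm p (t + n0) B s.
  move=> s c; apply: eq_in_all => k; rewrite mem_iota => /andP [_ hk].
  by rewrite (Lk_per p (t + (n0 + B)) P v k s c Hv) //; lia.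
under eq_bigr do under eq_bigr do rewrite Hs Hper.
rewrite exchange_big_nat /=.
apply: leq_trans (_ : \sum_(0 <= s < P) allsm p (t + n0) B s * p./2.+1 <= _).
  apply: leq_sum => s _.
  case: (allsm p (t + n0) B s) => /=.
    rewrite mul1n -(cnt (fun c => ~~ Lk p (t + n0 + B).+1 (2 ^ (s + P * c))) p) -addnA.
    apply: count_small Hv nv => //; lia.
  by rewrite mul0n big1.
by rewrite -big_distrl /= expnS mulnC -mulnA leq_mul2l IH orbT.
Qed.


Lemma cntm (a : pred nat) m n : count a (iota m n) = \sum_(m <= i < m + n) a i.
Proof.
rewrite -sum1_count big_mkcond /index_iota addKn /=.
by apply: eq_bigr => i _; case: (a i).
Qed.

Lemma sum_ext0 (f : nat -> nat) N M : 1 <= N -> N <= M -> (forall k, N <= k -> f k = 0) ->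
  \sum_(1 <= k < M) f k = \sum_(1 <= k < N) f k.
Proof.
move=> N1 NM Hf; rewrite (big_cat_nat N1 NM) /= [X in _ + X]big1_seq ?addn0 //.
by move=> i /andP [_]; rewrite mem_index_iota => /andP [h _]; apply: Hf.
Qed.

Lemma sum_widen (f : nat -> nat) m N M : m <= N -> N <= M ->
  \sum_(m <= k < N) f k <= \sum_(m <= k < M) f k.
Proof. by move=> h1 h2; rewrite (big_cat_nat h1 h2) /= leq_addr. Qed.

Lemma legendre p n K : prime p -> 0 < n ->
  count (fun k => Lk p k n) (iota 1 K) <= logn p 'C(n + n, n).
Proof.
move=> pp n0.
have p1 := prime_gt1 pp.
have HC := bin_fact (leq_addr n n).
rewrite addnK in HC.
have Hl : logn p (n + n)`! = logn p 'C(n + n, n) + logn p n`! + logn p n`!.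
  by rewrite -HC !lognM ?bin_gt0 ?leq_addr ?muln_gt0 ?fact_gt0 // addnA.
set M := K.+1 + (n + n).+1.
have big_small : forall x k, x < k -> x %/ p ^ k = 0.
  move=> x k xk; apply: divn_small; apply: ltn_trans xk _; exact: ltn_expl.
have EZ : logn p (n + n)`! = \sum_(1 <= k < M) (n + n) %/ p ^ k.
  rewrite logn_fact // (@sum_ext0 _ (n + n).+1 M) //.
  - by rewrite /M leq_addl.
  - by move=> k hk; apply: big_small.
have EY : logn p n`! = \sum_(1 <= k < M) n %/ p ^ k.
  rewrite logn_fact // (@sum_ext0 _ n.+1 M) //.
  - by rewrite /M; lia.
  - by move=> k hk; apply: big_small.
have term : forall k, n %/ p ^ k + n %/ p ^ k + Lk p k n <= (n + n) %/ p ^ k.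
  move=> k; have P0 : 0 < p ^ k by rewrite expn_gt0 ltnW.
  have -> : n + n = (n %/ p ^ k + n %/ p ^ k) * p ^ k + (n %% p ^ k + n %% p ^ k).
    by rewrite [in LHS](divn_eq n (p ^ k)); ring.
  rewrite divnMDl // leq_add2l /Lk.
  case: (leqP (p ^ k) (2 * (n %% p ^ k))) => h //=.
  by rewrite divn_gt0 // addnn -mul2n.
have Ssum : \sum_(1 <= k < M) (n %/ p ^ k + n %/ p ^ k + Lk p k n) <= \sum_(1 <= k < M) (n + n) %/ p ^ k.
  by apply: leq_sum => k _; exact: term k.
rewrite !big_split /= -EY -EZ Hl in Ssum.
have : \sum_(1 <= i < M) Lk p i n <= logn p 'C(n + n, n) by lia.
apply: leq_trans.
rewrite cntm add1n. apply: sum_widen => //. by rewrite /M leq_addr.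
Qed.


Lemma sumb (T : Type) (f : pred T) (r : seq T) : \sum_(i <- r) (f i : nat) = count f r.
Proof. by rewrite -sum1_count [RHS]big_mkcond; apply: eq_bigr => i _; case: (f i). Qed.

Lemma count_union (T : Type) (a : pred nat) (b : T -> pred nat) (r : seq T) s :
  (forall x, a x -> has (fun i => b i x) r) -> count a s <= \sum_(i <- r) count (b i) s.
Proof.
move=> H; elim: s => [|x s IH] /=; first by rewrite big1.
rewrite big_split /= leq_add //.
case E: (a x) => //=.
by rewrite sumb -has_count; apply: H.
Qed.

Lemma allsm_per p lo B P v j s c : 2 ^ P = 1 + p ^ j * v -> lo + B <= j ->
  allsm p lo B (s + P * c) = allsm p lo B s.
Proof.
move=> HP h; apply: eq_in_all => k; rewrite mem_iota => /andP [_ hk].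
by rewrite (Lk_per p j P v k s c HP) //; lia.
Qed.

Lemma blocks_count p t B s e : (forall b, b < e -> ~~ allsm p (t + b * B) B s) ->
  e <= count (fun k => Lk p k (2 ^ s)) (iota t.+1 (e * B)).
Proof.
elim: e => [|e IH] H //.
rewrite mulSnr iotaD count_cat.
have h1 : e <= count (fun k => Lk p k (2 ^ s)) (iota t.+1 (e * B)).
  by apply: IH => b hb; apply: H; apply: ltnW.
have h2 : 0 < count (fun k => Lk p k (2 ^ s)) (iota (t.+1 + e * B) B).
  rewrite -has_count; have := H e (ltnSn e).
  rewrite /allsm -addSn => /allPn [k hk hl]; apply/hasP; exists k => //.
  by move: hl; rewrite negbK.
by rewrite -addn1 leq_add.
Qed.

Lemma bad_blocks p t B e s : prime p ->
  logn p 'C(2 ^ s.+1, 2 ^ s) < e -> has (fun b => allsm p (t + b * B) B s) (iota 0 e).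
Proof.
move=> pp hl; apply/negPn/negP => /hasPn H.
have h : e <= count (fun k => Lk p k (2 ^ s)) (iota t.+1 (e * B)).
  by apply: blocks_count => b hb; apply: H; rewrite mem_iota.
have : count (fun k => Lk p k (2 ^ s)) (iota t.+1 (e * B)) <= logn p 'C(2 ^ s.+1, 2 ^ s).
  apply: leq_trans (_ : count (fun k => Lk p k (2 ^ s)) (iota 1 (t + e * B)) <= _).
    by rewrite iotaD count_cat add1n leq_addl.
  by rewrite expnS mul2n -addnn; apply: legendre; rewrite // expn_gt0.
move=> h'; have := leq_trans h h'; by rewrite leqNgt hl.
Qed.


Lemma block_count_bound p D t B n0 a : prime p -> odd p -> 0 < t -> 0 < D ->
  (forall i, exists v, 2 ^ (D * p ^ i) = 1 + p ^ (t + i) * v /\ ~~ (p %| v)) ->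
  3 ^ B * count (allsm p (t + n0) B) (iota 0 a) <= 2 ^ B * a + 3 ^ B * (p./2.+1 ^ B * (D * p ^ n0)).
Proof.
move=> pp op t0 D0 H.
have p0 := prime_gt0 pp.
set P := D * p ^ (n0 + B).
set X := D * p ^ n0.
set h := p./2.+1.
have P0 : 0 < P by rewrite muln_gt0 D0 expn_gt0 p0.
have [v [Hv _]] := H (n0 + B).
have EP : P = X * p ^ B by rewrite /P /X expnD mulnA.
have per : forall i, allsm p (t + n0) B (i + P) = allsm p (t + n0) B i.
  move=> i; rewrite -[P]muln1; apply: (allsm_per p (t + n0) B P v (t + (n0 + B)) i 1) => //.
  by rewrite addnA.
have c1 : count (allsm p (t + n0) B) (iota 0 a) <= (a %/ P).+1 * (h ^ B * X).
  rewrite cnt; apply: (leq_trans (periodic_bound (fun s => nat_of_bool (allsm p (t + n0) B s)) P a P0 (fun i => congr1 nat_of_bool (per i)))).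
  by rewrite leq_mul2l block_bound ?orbT.
have h3 : 3 * h <= 2 * p.
  have := odd_double_half p; rewrite op -mul2n /h.
  have := prime_gt1 pp.
  move: (p./2) => q; lia.
have hB : (3 * h) ^ B <= (2 * p) ^ B.
  by elim: (B) => // B' IHB; rewrite !expnS leq_mul.
apply: leq_trans (_ : 3 ^ B * ((a %/ P).+1 * (h ^ B * X)) <= _).
  by rewrite leq_mul2l c1 orbT.
rewrite mulSn mulnDr [X in X <= _]addnC leq_add2r.
have qa : a %/ P * P <= a by apply: leq_trunc_div.
move: qa; set q := a %/ P => qa.
apply: leq_trans (_ : 2 ^ B * (q * P) <= _); last by rewrite leq_mul2l qa orbT.
rewrite EP.
have -> : 3 ^ B * (q * (h ^ B * X)) = (q * X) * (3 * h) ^ B by rewrite expnMn; ring.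
have -> : 2 ^ B * (q * (X * p ^ B)) = (q * X) * (2 * p) ^ B by rewrite expnMn; ring.
by rewrite leq_mul2l hB orbT.
Qed.


Lemma prime_bound p e B : prime p -> odd p -> exists C, forall a,
  3 ^ B * count (fun s => logn p 'C(2 ^ s.+1, 2 ^ s) < e) (iota 0 a) <= e * 2 ^ B * a + C.
Proof.
move=> pp op.
have [D [t [u [D0 t0 HD nu]]]] := start p pp op.
have H := tower p D t u pp op t0 HD nu.
exists (\sum_(b <- iota 0 e) 3 ^ B * (p./2.+1 ^ B * (D * p ^ (b * B)))) => a.
apply: leq_trans (_ : 3 ^ B * \sum_(b <- iota 0 e) count (allsm p (t + b * B) B) (iota 0 a) <= _).
  rewrite leq_mul2l; apply/orP; right; apply: count_union => s hs.
  exact: bad_blocks.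
have -> : e * 2 ^ B * a = \sum_(b <- iota 0 e) 2 ^ B * a.
  have := sum_nat_const_nat 0 e (2 ^ B * a).
  by rewrite /index_iota subn0 => ->; rewrite mulnA.
rewrite big_distrr -big_split /=.
apply: leq_sum => b _.
exact: block_count_bound.
Qed.

Lemma list_bound m B (r : seq nat) : (forall p, p \in r -> prime p && odd p) -> exists C, forall a,
  3 ^ B * \sum_(p <- r) count (fun s => logn p 'C(2 ^ s.+1, 2 ^ s) < logn p m) (iota 0 a)
   <= (\sum_(p <- r) logn p m) * 2 ^ B * a + C.
Proof.
elim: r => [|p r IH] Hr.
  by exists 0 => a; rewrite !big_nil muln0.
have /andP [pp op] := Hr p (mem_head p r).
have [C1 H1] := prime_bound p (logn p m) B pp op.
have [C2 H2] := IH (fun q hq => Hr q (ltac:(by rewrite in_cons hq orbT))).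
exists (C1 + C2) => a.
rewrite !big_cons mulnDr !mulnDl.
have := leq_add (H1 a) (H2 a).
move=> h; apply: leq_trans h _; lia.
Qed.

Lemma main_nat m B : 0 < m -> odd m -> exists C, forall a,
  3 ^ B * bad_count m a <= (\sum_(p <- primes m) logn p m) * 2 ^ B * a + C.
Proof.
move=> m0 om.
have Hr : forall p, p \in primes m -> prime p && odd p.
  move=> p; rewrite mem_primes => /and3P [pp _ pm]; rewrite pp /=.
  apply/negPn/negP => ep.
  have : 2 %| m by apply: dvdn_trans pm; rewrite dvdn2.
  by rewrite dvdn2 om.
have [C HC] := list_bound m B (primes m) Hr.
exists C => a; apply: leq_trans (HC a).
rewrite leq_mul2l; apply/orP; right.
apply: count_union => s /= nd.
apply/negPn/negP => /hasPn H; move/negP: nd; apply.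
apply/dvdn_partP => // p pin.
have pm : p \in primes m by [].
have /andP [pp _] := Hr p pm.
rewrite p_part pfactor_dvdn // ?bin_gt0 ?leq_pexp2l //.
by rewrite leqNgt; apply: H.
Qed.


Lemma INR_muln a b : INR (a * b) = Rmult (INR a) (INR b).
Proof. by rewrite -mult_INR. Qed.

Lemma INR_addn a b : INR (a + b) = Rplus (INR a) (INR b).
Proof. by rewrite -plus_INR. Qed.

Lemma INR_expn x n : INR (x ^ n) = pow (INR x) n.
Proof. elim: n => [|n IH]; first by rewrite expn0. by rewrite expnS INR_muln IH. Qed.

Theorem corollary3p3 (m : nat) (hm0 : 0 < m) (hodd : odd m) :
  forall eps : R, Rlt 0 eps ->
    exists N : nat, forall a : nat, N <= a -> 0 < a ->
      Rlt (Rdiv (INR (bad_count m a)) (INR a)) eps.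
Proof.
move=> eps heps.
set E := \sum_(p <- primes m) logn p m.
set y := Rdiv eps (Rmult 2 (Rplus (INR E) 1)).
have E0 : Rle 0 (INR E) by apply: pos_INR.
have y0 : Rlt 0 y by rewrite /y; apply: Rdiv_lt_0_compat; lra.
have [B HB] : exists B, Rlt (pow (Rdiv 2 3) B) y.
  have [N0 HN0] := pow_lt_1_zero (Rdiv 2 3) ltac:(rewrite Rabs_pos_eq; lra) y y0.
  exists N0; have := HN0 N0 (le_n _); rewrite Rabs_pos_eq //.
  apply: pow_le; lra.
have [C HC] := main_nat m B hm0 hodd.
set z := Rdiv (2 * INR C) eps.
have z0 : Rle 0 z by rewrite /z; apply: Rmult_le_pos; [have := pos_INR C; lra | apply: Rlt_le; apply: Rinv_0_lt_compat].
have [up1 _] := archimed z.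
exists (Z.to_nat (up z)) => a ha a0.
have hNa : Rlt z (INR a).
  apply: (Rlt_le_trans _ _ _ up1).
  have upz : (0 <= up z)%Z by apply: le_IZR; lra.
  rewrite -(Z2Nat.id _ upz) -INR_IZR_INZ; apply: le_INR; apply/leP.
  exact: ha.
have Ha : Rlt 0 (INR a) by apply: lt_0_INR; apply/ltP.
have H := le_INR _ _ (elimT leP (HC a)).
rewrite !INR_muln INR_addn !INR_muln !INR_expn in H.
set r := INR (bad_count m a) in H *.
set A := INR a in Ha hNa H *.
have X3 : Rle 1 (pow (INR 3) B).
  apply: pow_R1_Rle; rewrite /=; lra.
have hz : pow (INR 2) B = Rmult (pow (Rdiv 2 3) B) (pow (INR 3) B).
  rewrite -Rpow_mult_distr; congr pow; rewrite /=; lra.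
set w := pow (Rdiv 2 3) B in HB hz.
have w0 : Rle 0 w by rewrite /w; apply: pow_le; lra.
set X := pow (INR 3) B in X3 hz H.
rewrite hz -/E in H.
have C0 : Rle 0 (INR C) by apply: pos_INR.
have h1 : Rle r (Rplus (Rmult (Rmult (INR E) w) A) (INR C)).
  apply: (Rmult_le_reg_l X); first lra.
  have : Rle (INR C) (Rmult X (INR C)) by nra.
  nra.
have h2 : Rlt (Rmult (INR E) w) (Rdiv eps 2).
  have : Rle (Rmult (INR E) w) (Rmult (INR E) y) by nra.
  have : Rlt (Rmult (INR E) y) (Rdiv eps 2).
    have hy : Rmult y (Rmult 2 (Rplus (INR E) 1)) = eps.
      rewrite /y /Rdiv Rmult_assoc Rinv_l ?Rmult_1_r //; lra.
    nra.
  lra.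
have h3 : Rlt (INR C) (Rmult (Rdiv eps 2) A).
  move: hNa; rewrite /z => hNa.
  have : Rlt (2 * INR C) (Rmult eps A).
    have := Rmult_lt_compat_l eps _ _ heps hNa.
    by rewrite /Rdiv Rmult_comm Rmult_assoc Rinv_l ?Rmult_1_r; lra.
  lra.
have h4 : Rlt r (Rmult eps A) by nra.
apply: (Rmult_lt_reg_r A) => //.
rewrite /Rdiv Rmult_assoc Rinv_l; lra.
Qed.
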